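(* A permutation $\varpi\in S_n$ is amenable if and only if $\varpi$ is vexillary, i.e. $2143$-avoiding.
   Context: $S_n$ is the symmetric group in one-line notation; $\ell$ denotes length (number of inversions). A permutation is $v$-avoiding if it contains no subword with the same relative order as $v$. The code of $\varpi$ is $\gamma_i:=\#\{j>i\mid\varpi_j<\varpi_i\}$, and $\varpi$ is dominant if its code is weakly decreasing (equivalently, $\varpi$ is $132$-avoiding). A (right) modification of $\varpi$ is $\varpi\omega$ with $\omega\in S_n$ $231$-avoiding and $\ell(\varpi\omega)=\ell(\varpi)-\ell(\omega)$. A permutation is amenable if it is a modification of a dominant permutation. *)

(* Defs.v *)
(* Permutations of {0,...,n-1} = 'I_n, as {perm 'I_n};
   one-line notation of w is (w 0, ..., w (n-1)). *)
From mathcomp Require Import all_boot all_fingroup.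
Set Implicit Arguments. Unset Strict Implicit. Unset Printing Implicit Defensive.

Definition perm_len (n : nat) (w : {perm 'I_n}) : nat :=
  #|[set p : 'I_n * 'I_n | (p.1 < p.2) && (w p.2 < w p.1)]|.

(* w contains the pattern v (given in one-line notation as a sequence of
   distinct naturals; only relative order matters) *)
Definition contains_pattern (n : nat) (w : {perm 'I_n}) (v : seq nat) : Prop :=
  exists f : 'I_(size v) -> 'I_n,
    (forall a b : 'I_(size v), a < b -> f a < f b) /\
    (forall a b : 'I_(size v), (w (f a) < w (f b)) = (nth 0 v a < nth 0 v b)).

Definition avoids (n : nat) (w : {perm 'I_n}) (v : seq nat) : Prop :=
  ~ contains_pattern w v.

Definition perm_code (n : nat) (w : {perm 'I_n}) (i : 'I_n) : nat :=
  #|[set j : 'I_n | (i < j) && (w j < w i)]|.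

Definition dominant (n : nat) (w : {perm 'I_n}) : Prop :=
  forall i j : 'I_n, i <= j -> perm_code w j <= perm_code w i.

(* product in one-line notation: (w om)(i) = w (om i).  In mathcomp,
   (s * t) x = t (s x), so w om is written om * w. *)
Definition pmul (n : nat) (w om : {perm 'I_n}) : {perm 'I_n} := (om * w)%g.

(* right modification of w : w om with om 231-avoiding and
   l(w om) = l(w) - l(om)  (stated additively, in nat) *)
Definition is_modification (n : nat) (w u : {perm 'I_n}) : Prop :=
  exists om : {perm 'I_n},
    avoids om [:: 2; 3; 1] /\
    perm_len (pmul w om) + perm_len om = perm_len w /\
    u = pmul w om.

Definition amenable (n : nat) (u : {perm 'I_n}) : Prop :=
  exists w : {perm 'I_n}, dominant w /\ is_modification w u.

Definition vexillary (n : nat) (w : {perm 'I_n}) : Prop :=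
  avoids w [:: 2; 1; 4; 3].

(* Main.v *)
Require Import Defs.
From mathcomp Require Import all_boot all_fingroup.
From mathcomp Require Import zify.
Set Implicit Arguments. Unset Strict Implicit. Unset Printing Implicit Defensive.

Lemma mk231 n (o : {perm 'I_n}) (i j k : 'I_n) :
  i < j -> j < k -> o k < o i -> o i < o j -> contains_pattern o [:: 2; 3; 1].
Proof.
move=> hij hjk h1 h2.
exists (fun a : 'I_3 => nth i [:: i; j; k] a); split.
  by move=> [[|[|[|a]]] Ha] [[|[|[|b]]] Hb] //=; lia.
by move=> [[|[|[|a]]] Ha] [[|[|[|b]]] Hb] //=; lia.
Qed.

Lemma get231 n (o : {perm 'I_n}) : contains_pattern o [:: 2; 3; 1] ->
  exists i j k : 'I_n, [/\ i < j, j < k, o k < o i & o i < o j].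
Proof.
move=> [f [Hm Hv]].
have h01 := Hm (@Ordinal 3 0 isT) (@Ordinal 3 1 isT) isT.
have h12 := Hm (@Ordinal 3 1 isT) (@Ordinal 3 2 isT) isT.
have v20 := Hv (@Ordinal 3 2 isT) (@Ordinal 3 0 isT).
have v01 := Hv (@Ordinal 3 0 isT) (@Ordinal 3 1 isT).
exists (f (@Ordinal 3 0 isT)), (f (@Ordinal 3 1 isT)), (f (@Ordinal 3 2 isT)).
by split.
Qed.

Lemma mk2143 n (o : {perm 'I_n}) (i j k l : 'I_n) :
  i < j -> j < k -> k < l -> o j < o i -> o i < o l -> o l < o k ->
  contains_pattern o [:: 2; 1; 4; 3].
Proof.
move=> hij hjk hkl h1 h2 h3.
exists (fun a : 'I_4 => nth i [:: i; j; k; l] a); split.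
  by move=> [[|[|[|[|a]]]] Ha] [[|[|[|[|b]]]] Hb] //=; lia.
by move=> [[|[|[|[|a]]]] Ha] [[|[|[|[|b]]]] Hb] //=; lia.
Qed.

Lemma get2143 n (o : {perm 'I_n}) : contains_pattern o [:: 2; 1; 4; 3] ->
  exists i j k l : 'I_n, [/\ i < j, j < k, k < l & [/\ o j < o i, o i < o l & o l < o k]].
Proof.
move=> [f [Hm Hv]].
have h01 := Hm (@Ordinal 4 0 isT) (@Ordinal 4 1 isT) isT.
have h12 := Hm (@Ordinal 4 1 isT) (@Ordinal 4 2 isT) isT.
have h23 := Hm (@Ordinal 4 2 isT) (@Ordinal 4 3 isT) isT.
have v10 := Hv (@Ordinal 4 1 isT) (@Ordinal 4 0 isT).
have v03 := Hv (@Ordinal 4 0 isT) (@Ordinal 4 3 isT).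
have v32 := Hv (@Ordinal 4 3 isT) (@Ordinal 4 2 isT).
exists (f (@Ordinal 4 0 isT)), (f (@Ordinal 4 1 isT)), (f (@Ordinal 4 2 isT)), (f (@Ordinal 4 3 isT)).
by split => //; split.
Qed.

Lemma pneq n (w : {perm 'I_n}) (i j : 'I_n) : (i : nat) != j -> (w i : nat) != w j.
Proof.
move=> h; apply/negP => /eqP /val_inj /perm_inj E; by rewrite E eqxx in h.
Qed.

Lemma no132_dominant n (w : {perm 'I_n}) :
  (forall i j k : 'I_n, i < j -> j < k -> w i < w k -> w k < w j -> False) ->
  dominant w.
Proof.
move=> H i j hij; rewrite /perm_code; apply: subset_leq_card.
apply/subsetP => m; rewrite !inE => /andP[hjm hm].
case: (ltngtP i j) hij => // hij _; last first.
  have ej : i = j by apply: val_inj.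
  by subst; apply/andP.
have nij : (w i : nat) != w j by apply: pneq; lia.
have nim : (w i : nat) != w m by apply: pneq; lia.
case: (ltngtP (w i) (w j)) => hw.
- case: (ltngtP (w m) (w i)) => hmi; first (apply/andP; split => //; lia).
  + by case: (H i j m hij hjm hmi hm).
  + by rewrite hmi eqxx in nim.
- apply/andP; split; lia.
- by rewrite hw eqxx in nij.
Qed.

Lemma dominant_no132 n (w : {perm 'I_n}) : dominant w ->
  forall i j k : 'I_n, i < j -> j < k -> w i < w k -> w k < w j -> False.
Proof.
move=> D i j k hij hjk h1 h2.
pose P := [pred p : 'I_n | (p < j) && (w p < w k)].
have Pi : P i by rewrite /P inE; apply/andP.
case: (@arg_maxnP _ i P (fun p : 'I_n => (p : nat)) Pi) => i' /andP[hi'j hi'k] Hmax.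
have := D i' j (ltnW hi'j).
rewrite /perm_code; apply/negP; rewrite -ltnNge; apply: proper_card.
apply/properP; split.
  apply/subsetP => m; rewrite !inE => /andP[him hm].
  have hmj : j < m.
    case: (ltngtP j m) => // hjm.
      have Pm : P m by rewrite /P inE; apply/andP; split; lia.
      have := Hmax m Pm; rewrite /=; lia.
    have ejm : j = m by apply: val_inj.
    by subst; lia.
  apply/andP; split => //; lia.
exists k; rewrite !inE; first by apply/andP.
apply/negP => /andP[_ hk]; lia.
Qed.

Lemma peq n (s : {perm 'I_n}) (i j : 'I_n) : ((s i : nat) == s j) = ((i : nat) == j).
Proof.
apply/eqP/eqP => [/val_inj/perm_inj -> // | /val_inj -> //].
Qed.

Lemma len_formula n (w om : {perm 'I_n}) :
  perm_len w + 2 * #|[set p : 'I_n * 'I_n | (p.1 < p.2) && (om p.2 < om p.1)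
                        && (pmul w om p.2 < pmul w om p.1)]|
  = perm_len (pmul w om) + perm_len om.
Proof.
set u := pmul w om.
have uE x : u x = w (om x) by rewrite /u /pmul permM.
set C := [set p : 'I_n * 'I_n | _].
pose X1 := [set p : 'I_n * 'I_n | (p.1 < p.2) && (om p.1 < om p.2) && (u p.2 < u p.1)].
pose X2 := [set p : 'I_n * 'I_n | (p.1 < p.2) && (om p.2 < om p.1) && (u p.1 < u p.2)].
pose f := fun p : 'I_n * 'I_n => (om p.1, om p.2).
have finj : injective f.
  by move=> [a b] [c d] [/perm_inj -> /perm_inj ->].
pose g := fun p : 'I_n * 'I_n => (p.2, p.1).
have ginj : injective g by move=> [a b] [c d] [-> ->].
pose L := [set p : 'I_n * 'I_n | p.1 < p.2].
pose T := [set p : 'I_n * 'I_n | (om p.1 < om p.2) && (u p.2 < u p.1)].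
have HW : perm_len w = #|T|.
  by rewrite /perm_len -(card_preimset _ finj); apply: eq_card => p; rewrite !inE /= !uE.
have HT : #|T| = #|X1| + #|X2|.
  rewrite -(cardsID L T); congr (_ + _).
    apply: eq_card => -[a b]; rewrite !inE /=; lia.
  rewrite -(card_preimset _ ginj); apply: eq_card => -[a b]; rewrite !inE /=.
  have := peq om a b; have := peq u a b; lia.
have HU : perm_len u = #|C| + #|X1|.
  rewrite /perm_len -(cardsID [set p : 'I_n * 'I_n | om p.2 < om p.1]); congr (_ + _).
    apply: eq_card => -[a b]; rewrite !inE /=; lia.
  apply: eq_card => -[a b]; rewrite !inE /=.
  have := peq om a b; have := peq u a b; lia.
have HO : perm_len om = #|C| + #|X2|.
  rewrite /perm_len -(cardsID [set p : 'I_n * 'I_n | u p.2 < u p.1]); congr (_ + _).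
    apply: eq_card => -[a b]; rewrite !inE /=; lia.
  apply: eq_card => -[a b]; rewrite !inE /=.
  have := peq om a b; have := peq u a b; lia.
rewrite HW HT HU HO; lia.
Qed.
Section Constr.
Variables (n : nat) (u : {perm 'I_n}).

Definition bad (j : 'I_n) := [exists l : 'I_n, [exists k : 'I_n,
  (j < l) && (l < k) && (u j < u k) && (u k < u l)]].
Definition E (i j : 'I_n) := (i < j) && (u i < u j) && (bad j ||
  [exists k : 'I_n, (j < k) && (u i < u k) && (u k < u j)]).
Definition prec (i j : 'I_n) := ((i < j) && ~~ E i j) || ((j < i) && E j i).

Lemma badP (j : 'I_n) : reflect (exists l k : 'I_n, [/\ j < l, l < k, u j < u k & u k < u l]) (bad j).
Proof.
apply: (iffP existsP) => [[l /existsP[k /andP[/andP[/andP[h1 h2] h3] h4]]] | [l [k [h1 h2 h3 h4]]]].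
  by exists l, k.
by exists l; apply/existsP; exists k; rewrite h1 h2 h3 h4.
Qed.

Lemma EP (i j : 'I_n) : reflect [/\ i < j, u i < u j & (bad j \/ exists k : 'I_n, [/\ j < k, u i < u k & u k < u j])] (E i j).
Proof.
apply: (iffP idP).
  rewrite /E => /andP[/andP[h1 h2] /orP[h3 | /existsP[k /andP[/andP[h4 h5] h6]]]].
    by split => //; left.
  by split => //; right; exists k.
move=> [h1 h2 [h3 | [k [h4 h5 h6]]]]; rewrite /E h1 h2 ?h3 //=.
by apply/orP; right; apply/existsP; exists k; rewrite h4 h5 h6.
Qed.

Lemma E_trans (i j k : 'I_n) : E i j -> E j k -> E i k.
Proof.
move=> /EP[h1 h2 _] /EP[h3 h4 [hb | [m [h5 h6 h7]]]]; apply/EP; split; try lia.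
by right; exists m; split => //; lia.
Qed.

Lemma E_cotrans (i j k : 'I_n) : i < j -> j < k -> E i k -> E i j || E j k.
Proof.
move=> hij hjk /EP[h1 h2 H].
have := peq u i j; have := peq u j k => e1 e2.
case: (ltngtP (u j) (u i)) => c1; last by lia.
- apply/orP; right; apply/EP; split => //; try lia.
  case: H => [hb | [m [h5 h6 h7]]]; first by left.
  by right; exists m; split => //; lia.
case: (ltngtP (u j) (u k)) => c2; last by lia.
- case: H => [hb | [m [h5 h6 h7]]].
    by apply/orP; right; apply/EP; split => //; left.
  have := peq u m j => e3.
  case: (ltngtP (u m) (u j)) => c3; last by lia.
  + by apply/orP; left; apply/EP; split => //; right; exists m; split => //; lia.
  + by apply/orP; right; apply/EP; split => //; right; exists m; split => //; lia.
- by apply/orP; left; apply/EP; split => //; right; exists k.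
Qed.

Hypothesis vex : avoids u [:: 2; 1; 4; 3].

Lemma E_231 (i j k : 'I_n) : i < j -> j < k -> E i k -> E j k -> E i j.
Proof.
move=> hij hjk /EP[h1 h2 H1] /EP[h3 h4 H2].
have := peq u i j => e1.
case: (ltngtP (u i) (u j)) => c1; last by lia.
- apply/EP; split => //.
  case: H2 => [/badP[l [m [h5 h6 h7 h8]]] | [m [h5 h6 h7]]].
    by left; apply/badP; exists l, m; split => //; lia.
  by left; apply/badP; exists k, m; split => //; lia.
- exfalso; apply: vex.
  case: H1 => [/badP[l [m [h5 h6 h7 h8]]] | [m [h5 h6 h7]]].
    by apply: (@mk2143 _ u i j l m) => //; lia.
  by apply: (@mk2143 _ u i j k m) => //; lia.
Qed.

Lemma precL (i j : 'I_n) : i < j -> prec i j = ~~ E i j.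
Proof. move=> h; have h' : (j < i) = false by lia. by rewrite /prec h h' /= orbF. Qed.

Lemma precG (i j : 'I_n) : j < i -> prec i j = E j i.
Proof. move=> h; have h' : (i < j) = false by lia. by rewrite /prec h h'. Qed.

Lemma prec_irr (i : 'I_n) : prec i i = false.
Proof. by rewrite /prec ltnn. Qed.

Lemma prec_ne (i j : 'I_n) : (i : nat) != j -> prec i j = ~~ prec j i.
Proof.
move=> h; case: (ltngtP i j) => c; last by rewrite c eqxx in h.
  by rewrite precL // precG // negbK.
by rewrite precG // precL // negbK.
Qed.

Lemma prec_trans (i j k : 'I_n) : prec i j -> prec j k -> prec i k.
Proof.
move=> h1 h2.
have [eij|nij] := eqVneq i j; first by subst; rewrite prec_irr in h1.
have [ejk|njk] := eqVneq j k; first by subst; rewrite prec_irr in h2.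
have [eik|nik] := eqVneq i k.
  by subst; rewrite (prec_ne njk) h1 in h2.
have nij' : (i:nat) != j by [].
have njk' : (j:nat) != k by [].
have nik' : (i:nat) != k by [].
case: (ltngtP i j) => cij; last by rewrite cij eqxx in nij'.
- case: (ltngtP j k) => cjk; last by rewrite cjk eqxx in njk'.
  + case: (ltngtP i k) => cik; last by rewrite cik eqxx in nik'.
    * rewrite precL // in h1; rewrite precL // in h2; rewrite precL //.
      by apply/negP => /(E_cotrans cij cjk) /orP[]; apply/negP.
    * lia.
  + case: (ltngtP i k) => cik; last by rewrite cik eqxx in nik'.
    * rewrite precL // in h1; rewrite precG // in h2; rewrite precL //.
      by apply/negP => h; move/negP: h1; apply; apply: E_trans h h2.
    * rewrite precL // in h1; rewrite precG // in h2; rewrite precG //.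
      by move: (E_cotrans cik cij h2) => /orP[] // h; rewrite h in h1.
- case: (ltngtP j k) => cjk; last by rewrite cjk eqxx in njk'.
  + case: (ltngtP i k) => cik; last by rewrite cik eqxx in nik'.
    * rewrite precG // in h1; rewrite precL // in h2; rewrite precL //.
      by apply/negP => h; move/negP: h2; apply; apply: E_trans h1 h.
    * rewrite precG // in h1; rewrite precL // in h2; rewrite precG //.
      by move: (E_cotrans cjk cik h1) => /orP[] // h; rewrite h in h2.
  + case: (ltngtP i k) => cik; last by rewrite cik eqxx in nik'.
    * lia.
    * rewrite precG // in h1; rewrite precG // in h2; rewrite precG //.
      exact: E_trans h2 h1.
Qed.

Definition rk (i : 'I_n) := #|[set j | prec j i]|.

Lemma rk_lt (i : 'I_n) : rk i < n.
Proof.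
have h : #|[set j | prec j i]| <= #|[set~ i]|.
  apply: subset_leq_card; apply/subsetP => j; rewrite !inE.
  by apply: contraTneq => ->; rewrite prec_irr.
rewrite cardsC1 card_ord in h.
have := ltn_ord i; rewrite /rk; lia.
Qed.

Lemma rk_mono (i j : 'I_n) : prec i j -> rk i < rk j.
Proof.
move=> hij; apply: proper_card; apply/properP; split.
  by apply/subsetP => k; rewrite !inE => hki; apply: prec_trans hki hij.
by exists i; rewrite !inE ?prec_irr.
Qed.

Definition rko (i : 'I_n) : 'I_n := Ordinal (rk_lt i).

Lemma rko_inj : injective rko.
Proof.
move=> i j /(congr1 val) /= e.
have [//|nij] := eqVneq i j.
have nij' : (i:nat) != j by [].
case h: (prec i j).
  by have := rk_mono h; rewrite e ltnn.
have h' : prec j i by rewrite (@prec_ne j i) ?h // eq_sym.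
by have := rk_mono h'; rewrite e ltnn.
Qed.

Definition om := perm rko_inj.

Lemma om_lt (i j : 'I_n) : (om i < om j) = prec i j.
Proof.
rewrite !permE /=.
case h: (prec i j); first exact: rk_mono.
have [e|nij] := eqVneq i j; first by subst; rewrite ltnn.
have nij' : (i:nat) != j by [].
have h' : prec j i by rewrite (@prec_ne j i) ?h // eq_sym.
by have := rk_mono h'; lia.
Qed.

Lemma no_prec132 (a b c : 'I_n) : prec a b -> prec b c -> prec a c ->
  u a < u c -> u c < u b -> False.
Proof.
move=> hab hbc hac h1 h2.
have := peq u a b; have := peq u b c; have := peq u a c => e1 e2 e3.
case: (ltngtP a b) => cab; last by lia.
- rewrite precL // in hab.
  case: (ltngtP a c) => cac; last by lia.
  + case: (ltngtP b c) => cbc; last by lia.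
    * move/negP: hab; apply; apply/EP; split => //; first by lia.
      by right; exists c; split => //; lia.
    * rewrite precG // in hbc; move/EP: hbc => [_ _ H].
      move/negP: hab; apply; apply/EP; split => //; first by lia.
      case: H => [hb | [m [h3 h4 h5]]]; first by left.
      by right; exists m; split => //; lia.
  + rewrite precG // in hac; move/EP: hac => [_ ? _]; lia.
- rewrite precG // in hab; move/EP: hab => [_ ? _]; lia.
Qed.
End Constr.

Theorem theorem2 (n : nat) (w : {perm 'I_n}) :
  amenable w <-> avoids w [:: 2; 1; 4; 3].
Proof.
split.
- move=> [w0 [D [om0 [A [Hl ->]]]]].
  set u := pmul w0 om0.
  have uE x : u x = w0 (om0 x) by rewrite /u /pmul permM.
  move/get2143 => [p1 [p2 [p3 [p4 [c12 c23 c34 [v1 v2 v3]]]]]].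
  have LF := len_formula w0 om0; rewrite -/u in LF.
  set C := [set p : 'I_n * 'I_n | _] in LF.
  have C0 : #|C| = 0 by rewrite -/u in Hl; lia.
  have noc (i j : 'I_n) : i < j -> om0 j < om0 i -> u j < u i -> False.
    move=> h1 h2 h3.
    have : (i, j) \in C by rewrite inE /= h1 h2 h3.
    by move/eqP: C0; rewrite cards_eq0 => /eqP ->; rewrite inE.
  have := peq om0 p3 p4; have := peq om0 p1 p3; have := peq om0 p1 p2 => e1 e2 e3.
  case: (ltngtP (om0 p1) (om0 p3)) => c13; last by lia.
  + case: (ltngtP (om0 p3) (om0 p4)) => c34'; last by lia.
      apply: (dominant_no132 D c13 c34'); rewrite -!uE //.
    by apply: (noc p3 p4).
  + case: (ltngtP (om0 p1) (om0 p2)) => c12'; last by lia.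
      by apply: A; apply: (@mk231 _ om0 p1 p2 p3) => //; lia.
    by apply: (noc p1 p2).
- move=> vex.
  set o := om w.
  exists (o^-1%g * w)%g.
  have pE : pmul (o^-1%g * w)%g o = w by rewrite /pmul mulKVg.
  have wE x : (o^-1%g * w)%g x = w ((o^-1)%g x) by rewrite permM.
  split.
    apply: no132_dominant => i j k hij hjk h1 h2.
    rewrite !wE in h1 h2.
    apply: (@no_prec132 _ w ((o^-1)%g i) ((o^-1)%g j) ((o^-1)%g k)) => //.
    + by rewrite -om_lt -/o !permKV.
    + by rewrite -om_lt -/o !permKV.
    + by rewrite -om_lt -/o !permKV; lia.
  exists o; split; last split; last by rewrite pE.
  + move/get231 => [i [j [k [hij hjk h1 h2]]]].
    rewrite /o !om_lt in h1 h2.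
    have h3 : prec w k j by apply: prec_trans h1 h2.
    have hik : i < k by lia.
    rewrite precG // in h1; rewrite precL // in h2; rewrite precG // in h3.
    by move/negP: h2; apply; exact: (E_231 vex hij hjk h1 h3).
  + have LF := len_formula (o^-1%g * w)%g o; rewrite pE in LF.
    set C := #|_| in LF.
    have C0 : C = 0.
      rewrite /C; apply: eq_card0 => -[a b]; rewrite inE /=.
      apply/negP => /andP[/andP[h1 h2] h3].
      rewrite /o om_lt precG // in h2.
      by move/EP: h2 => [_ ? _]; lia.
    rewrite pE; lia.
Qed.
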